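(* Let $(\mathcal{N},d)$ be a complete global Alexandrov NPC space and $T:\mathcal{N}\to\mathcal{N}$ a nonexpansive distance convex mapping. Then, for any $p\in\mathcal{N}$ whose orbit $\{p,Tp,T^2p,\ldots\}$ is bounded, and any $q\in\mathcal{N}$, the following are equivalent: (i) $Tq=q$ and $q\in\overline{co}\{p,Tp,T^2p,\ldots\}$; (ii) $q=\lim_{n\to\infty} m_n(p)$ (convergence in the metric $d$); (iii) $q$ is the weak limit of the sequence $(m_n(p))$; (iv) $q$ is a weak cluster point of the sequence $(m_n(p))$.
   Context: A metric space $(\mathcal{N},d)$ is a geodesic length space if any two points $p,q$ are joined by a rectifiable curve $\gamma:[0,1]\to\mathcal{N}$ with $\gamma(0)=p$, $\gamma(1)=q$ of length $d(p,q)$ (a geodesic). It is a global Alexandrov NPC space if for all $q\in\mathcal{N}$, every geodesic $\gamma:[0,1]\to\mathcal{N}$ and $0\le t\le 1$: $d^2(q,\gamma(t))\le (1-t)d^2(q,\gamma(0))+t d^2(q,\gamma(1))-t(1-t)l(\gamma)^2$, where $l(\gamma)$ is the length of $\gamma$. In such spaces geodesics between two points are unique. A subset is convex if any two of its points are joined by a geodesic contained in it; $co(S)$ is the smallest convex set containing $S$, and $\overline{co}(S)$ its closure. $T$ is nonexpansive if $d(Tp,Tq)\le d(p,q)$ for all $p,q$. For $r,p\in\mathcal{N}$ and $n\ge1$ let $F_n(r,p)=\frac1n\sum_{i=0}^{n-1}d^2(r,T^ip)$, and let $m_n(p)$ be the unique minimizer of $F_n(\cdot,p)$ (it exists in a complete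 global Alexandrov NPC space). $T$ is distance convex if for all $n\in\mathbb{N}$ and $q\in\mathcal{N}$ the function $r\mapsto d^2(m_n(r),q)$ is convex on $\mathcal{N}$, i.e. its composition with every geodesic $[0,1]\to\mathcal{N}$ is convex. For $x\in\mathcal{N}$ and a geodesic arc $\gamma$, the projection $\pi(x,\gamma)$ is the unique point of $\gamma$ closest to $x$. A sequence $(p_n)$ converges weakly to $q$ if for every geodesic arc $\gamma$ through $q$, $\pi(p_n,\gamma)\to q$. A point $q$ is a weak cluster point of $(p_n)$ if for every neighborhood $U$ of $q$ there are infinitely many $n$ such that $\pi(p_n,\gamma)\in U$ for every geodesic arc $\gamma$ through $q$. *)

(* Defs.v *)
From Stdlib Require Import Reals Lra Lia ClassicalEpsilon.
Open Scope R_scope.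

Section NPC.
Context {X : Type} (d : X -> X -> R).

Definition is_metric : Prop :=
  (forall x y, 0 <= d x y) /\ (forall x y, d x y = 0 <-> x = y) /\
  (forall x y, d x y = d y x) /\ (forall x y z, d x z <= d x y + d y z).

Definition seq_cvg (u : nat -> X) (l : X) : Prop :=
  forall eps, 0 < eps -> exists N, forall n, (N <= n)%nat -> d (u n) l < eps.

Definition complete : Prop :=
  forall u : nat -> X,
    (forall eps, 0 < eps -> exists N, forall m n, (N <= m)%nat -> (N <= n)%nat ->
        d (u m) (u n) < eps) ->
    exists l, seq_cvg u l.

(** A geodesic [0,1] -> N (parametrized proportionally to arc length, so that
    its length l(gamma) equals d(gamma 0, gamma 1)); values outside [0,1]
    are irrelevant. *)
Definition geodesic (g : R -> X) : Prop :=
  forall s t, 0 <= s <= 1 -> 0 <= t <= 1 -> d (g s) (g t) = Rabs (s - t) * d (g 0) (g 1).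

Definition geodesic_length_space : Prop :=
  forall p q, exists g, geodesic g /\ g 0 = p /\ g 1 = q.

(** global Alexandrov NPC inequality; l(gamma) = d(gamma 0, gamma 1) *)
Definition NPC_ineq : Prop :=
  forall q g t, geodesic g -> 0 <= t <= 1 ->
    (d q (g t))^2 <= (1 - t) * (d q (g 0))^2 + t * (d q (g 1))^2
                      - t * (1 - t) * (d (g 0) (g 1))^2.

Definition complete_NPC_space : Prop :=
  is_metric /\ complete /\ geodesic_length_space /\ NPC_ineq.

Definition convex (C : X -> Prop) : Prop :=
  forall p q, C p -> C q ->
    exists g, geodesic g /\ g 0 = p /\ g 1 = q /\ forall t, 0 <= t <= 1 -> C (g t).

Definition co (S : X -> Prop) (x : X) : Prop :=
  forall C, convex C -> (forall y, S y -> C y) -> C x.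

Definition closed_co (S : X -> Prop) (x : X) : Prop :=
  forall eps, 0 < eps -> exists y, co S y /\ d x y < eps.

Definition nonexpansive (T : X -> X) : Prop := forall p q, d (T p) (T q) <= d p q.

Fixpoint sumR (n : nat) (f : nat -> R) : R :=
  match n with O => 0 | S k => sumR k f + f k end.

Definition Fn (T : X -> X) (n : nat) (r p : X) : R :=
  / INR n * sumR n (fun i => (d r (Nat.iter i T p))^2).

Definition m_n (T : X -> X) (n : nat) (p : X) : X :=
  epsilon (inhabits p) (fun m => forall r, Fn T n m p <= Fn T n r p).

Definition convex_on01 (f : R -> R) : Prop :=
  forall s t l, 0 <= s <= 1 -> 0 <= t <= 1 -> 0 <= l <= 1 ->
    f ((1 - l) * s + l * t) <= (1 - l) * f s + l * f t.

Definition distance_convex (T : X -> X) : Prop :=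
  forall (n : nat) (q : X), (1 <= n)%nat ->
    forall g, geodesic g -> convex_on01 (fun t => (d (m_n T n (g t)) q)^2).

Definition proj (g : R -> X) (x : X) : X :=
  g (epsilon (inhabits 0)
       (fun t => 0 <= t <= 1 /\ forall s, 0 <= s <= 1 -> d x (g t) <= d x (g s))).

Definition through (g : R -> X) (q : X) : Prop := exists t, 0 <= t <= 1 /\ g t = q.

Definition weak_cvg (u : nat -> X) (q : X) : Prop :=
  forall g, geodesic g -> through g q -> seq_cvg (fun n => proj g (u n)) q.

Definition weak_cluster (u : nat -> X) (q : X) : Prop :=
  forall eps, 0 < eps -> forall N, exists n, (N <= n)%nat /\
    forall g, geodesic g -> through g q -> d (proj g (u n)) q < eps.

Definition orbit (T : X -> X) (p : X) (x : X) : Prop := exists i, x = Nat.iter i T p.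

Definition bounded_orbit (T : X -> X) (p : X) : Prop :=
  exists M, forall i, d p (Nat.iter i T p) <= M.

End NPC.

(* Main.v *)
Require Import Defs.
From Stdlib Require Import Reals Lra Lia Psatz ClassicalEpsilon Classical.
Open Scope R_scope.

Lemma sumR_le (n : nat) (f g : nat -> R) :
  (forall i, (i < n)%nat -> f i <= g i) -> sumR n f <= sumR n g.
Proof.
  induction n; simpl; intros H; [lra|].
  assert (f n <= g n) by (apply H; lia).
  assert (sumR n f <= sumR n g) by (apply IHn; intros; apply H; lia). lra.
Qed.

Lemma sumR_const (n : nat) (c : R) : sumR n (fun _ => c) = INR n * c.
Proof. induction n; simpl sumR; [simpl; ring|]. rewrite IHn, S_INR. ring. Qed.

Lemma sumR_plus (n : nat) (f g : nat -> R) :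
  sumR n (fun i => f i + g i) = sumR n f + sumR n g.
Proof. induction n; simpl; [ring|]. rewrite IHn. ring. Qed.

Lemma sumR_scal (n : nat) (c : R) (f : nat -> R) :
  sumR n (fun i => c * f i) = c * sumR n f.
Proof. induction n; simpl; [ring|]. rewrite IHn. ring. Qed.

Lemma sumR_ext (n : nat) (f g : nat -> R) :
  (forall i, (i < n)%nat -> f i = g i) -> sumR n f = sumR n g.
Proof.
  induction n; simpl; intros H; [lra|].
  rewrite IHn by (intros; apply H; lia). rewrite H by lia. reflexivity.
Qed.

Lemma sumR_shift (n : nat) (f : nat -> R) :
  sumR n (fun i => f (S i)) = sumR n f - f 0%nat + f n.
Proof. induction n; simpl; [ring|]. rewrite IHn. ring. Qed.

Section Basics.
Context {X : Type} (d : X -> X -> R) (Hm : is_metric d).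

Lemma d_nonneg x y : 0 <= d x y. Proof. apply Hm. Qed.
Lemma d_sym x y : d x y = d y x. Proof. apply Hm. Qed.
Lemma d_tri x y z : d x z <= d x y + d y z. Proof. apply Hm. Qed.
Lemma d_refl x : d x x = 0. Proof. apply Hm. reflexivity. Qed.
Lemma d_eq x y : d x y = 0 -> x = y. Proof. apply Hm. Qed.

Lemma d_le_eps x y : (forall e, 0 < e -> d x y < e) -> x = y.
Proof.
  intros H. apply d_eq. destruct (Rle_lt_dec (d x y) 0).
  pose proof (d_nonneg x y); lra.
  specialize (H (d x y) r). lra.
Qed.

Lemma geo_d01 (g : R -> X) (s t : R) : geodesic d g -> 0 <= s <= 1 -> 0 <= t <= 1 ->
  d (g s) (g t) = Rabs (s - t) * d (g 0) (g 1).
Proof. intros H; apply H. Qed.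

Lemma geo_sub (g : R -> X) (a b : R) : geodesic d g -> 0 <= a <= 1 -> 0 <= b <= 1 ->
  geodesic d (fun u => g (a + u * (b - a))).
Proof.
  intros Hg Ha Hb s t Hs Ht.
  assert (E0 : a + 0 * (b - a) = a) by ring.
  assert (E1 : a + 1 * (b - a) = b) by ring.
  rewrite E0, E1.
  assert (I : forall u, 0 <= u <= 1 -> 0 <= a + u * (b - a) <= 1).
  { intros u Hu. split; nra. }
  rewrite (Hg _ _ (I s Hs) (I t Ht)), (Hg _ _ Ha Hb).
  replace (a + s * (b - a) - (a + t * (b - a))) with ((s - t) * (b - a)) by ring.
  rewrite Rabs_mult, (Rabs_minus_sym a b). ring.
Qed.

Lemma geo_unique (g h : R -> X) : geodesic d g -> geodesic d h -> NPC_ineq d ->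
  g 0 = h 0 -> g 1 = h 1 -> forall t, 0 <= t <= 1 -> g t = h t.
Proof.
  intros Hg Hh Hn E0 E1 t Ht.
  pose proof (Hn (h t) g t Hg Ht) as N.
  assert (A : d (h t) (g 0) = t * d (g 0) (g 1)).
  { rewrite E0, E1, (Hh t 0 Ht) by lra. rewrite Rabs_right by lra. ring. }
  assert (B : d (h t) (g 1) = (1 - t) * d (g 0) (g 1)).
  { rewrite E0, E1, (Hh t 1 Ht) by lra. rewrite Rabs_left1 by lra. ring. }
  rewrite A, B in N. symmetry. apply d_eq.
  assert (d (h t) (g t) ^ 2 <= 0) by nra.
  pose proof (d_nonneg (h t) (g t)). nra.
Qed.

End Basics.

Lemma small_inv e : 0 < e -> exists N, forall k, (N <= k)%nat -> / (INR k + 1) < e.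
Proof.
  intros He. destruct (INR_archimed e 1 He) as [N HN]. exists N. intros k Hk.
  apply le_INR in Hk. pose proof (pos_INR k).
  apply (Rmult_lt_reg_l (INR k + 1)); [lra|]. rewrite Rinv_r by lra. nra.
Qed.

Lemma inf_exists (A : Type) (P : A -> Prop) (f : A -> R) (a0 : A) :
  P a0 -> (forall a, P a -> 0 <= f a) ->
  exists m, 0 <= m /\ (forall a, P a -> m <= f a) /\
    (forall e, 0 < e -> exists a, P a /\ f a < m + e).
Proof.
  intros H0 Hpos.
  set (E := fun v => exists a, P a /\ v = - f a).
  assert (Hb : bound E). { exists 0. intros v [a [Ha ->]]. specialize (Hpos a Ha). lra. }
  assert (He : exists v, E v) by (exists (- f a0); exists a0; auto).
  destruct (completeness E Hb He) as [L [HL1 HL2]].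
  exists (- L). split; [|split].
  - assert (L <= 0). { apply HL2. intros v [a [Ha ->]]. specialize (Hpos a Ha). lra. } lra.
  - intros a Ha. assert (- f a <= L) by (apply HL1; exists a; auto). lra.
  - intros e He2. apply NNPP. intros Hn.
    assert (L <= L - e).
    { apply HL2. intros v [a [Ha ->]].
      destruct (Rlt_dec (f a) (- L + e)) as [h|h].
      - exfalso. apply Hn. exists a. auto.
      - lra. }
    lra.
Qed.

Section Bary.
Context {X : Type} (d : X -> X -> R) (Hm : is_metric d) (Hc : complete d)
  (Hgl : geodesic_length_space d) (Hn : NPC_ineq d).

Definition Sy (n : nat) (y : nat -> X) (x : X) : R := sumR n (fun i => (d x (y i))^2).

Lemma Sy_nonneg n y x : 0 <= Sy n y x.
Proof. unfold Sy; induction n; cbn [sumR]. lra. pose proof (pow2_ge_0 (d x (y n))). lra. Qed.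

Lemma Sy_geo n y g t : geodesic d g -> 0 <= t <= 1 ->
  Sy n y (g t) <= (1 - t) * Sy n y (g 0) + t * Sy n y (g 1)
                  - INR n * (t * (1 - t) * (d (g 0) (g 1))^2).
Proof.
  intros Hg Ht. unfold Sy. induction n; cbn [sumR]. simpl; lra.
  rewrite S_INR.
  pose proof (Hn (y n) g t Hg Ht) as N.
  rewrite !(d_sym d Hm (y n)) in N. lra.
Qed.

Lemma Sy_cont n y a b :
  Sy n y a <= (1 + d a b) * Sy n y b + INR n * (d a b + (d a b)^2).
Proof.
  unfold Sy. induction n; cbn [sumR]. simpl; lra. rewrite S_INR.
  pose proof (d_tri d Hm a b (y n)). pose proof (d_nonneg d Hm a b).
  pose proof (d_nonneg d Hm b (y n)). pose proof (d_nonneg d Hm a (y n)).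
  assert ((d a (y n))^2 <= (d a b + d b (y n))^2) by (apply pow_incr; lra).
  assert (0 <= d a b * (d b (y n) - 1)^2) by (apply Rmult_le_pos; [lra| apply pow2_ge_0]).
  assert ((d a (y n))^2 <= (1 + d a b) * (d b (y n))^2 + (d a b + (d a b)^2)) by nra.
  lra.
Qed.

Lemma Sy_min_exists n y : (1 <= n)%nat -> exists z, forall x, Sy n y z <= Sy n y x.
Proof.
  intros Hn1. assert (Hn0 : 1 <= INR n) by (apply (le_INR 1); auto).
  destruct (inf_exists X (fun _ => True) (Sy n y) (y 0%nat) I (fun a _ => Sy_nonneg n y a))
    as [m [Hm0 [Hm1 Hm2]]].
  assert (Hz : forall k : nat, exists z, Sy n y z < m + / (INR k + 1)).
  { intros k. destruct (Hm2 (/ (INR k + 1))) as [z [_ Hz]].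
    apply Rinv_0_lt_compat. pose proof (pos_INR k). lra. eauto. }
  set (z := fun k => proj1_sig (constructive_indefinite_description _ (Hz k))).
  assert (Hzk : forall k, Sy n y (z k) < m + / (INR k + 1)).
  { intros k. unfold z. destruct (constructive_indefinite_description _ (Hz k)). auto. }
  assert (Hcau : forall j k, (d (z j) (z k))^2 < 2 * (/ (INR j + 1) + / (INR k + 1))).
  { intros j k. destruct (Hgl (z j) (z k)) as [g [Hg [G0 G1]]].
    assert (Hh : 0 <= /2 <= 1) by lra.
    pose proof (Sy_geo n y g (/2) Hg Hh) as Hs. rewrite G0, G1 in Hs.
    pose proof (Hm1 (g (/2)) I). pose proof (Hzk j). pose proof (Hzk k).
    assert (INR n * (/ 2 * (1 - / 2) * d (z j) (z k) ^ 2) < / 2 * / (INR j + 1) + / 2 * / (INR k + 1)) by lra.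
    assert (0 <= d (z j) (z k) ^ 2) by nra. nra. }
  destruct (Hc z) as [l Hl].
  { intros e He. assert (He4 : 0 < e^2/4) by nra.
    destruct (small_inv (e^2 / 4) He4) as [N HN].
    exists N. intros j k Hj Hk. specialize (HN _ Hj) as Hj'. specialize (HN _ Hk) as Hk'.
    specialize (Hcau j k). pose proof (d_nonneg d Hm (z j) (z k)).
    apply Rnot_le_lt. intros Hle. nra. }
  exists l. intros x. apply Rle_trans with m; [|apply Hm1; exact I].
  apply Rle_plus_epsilon. intros e He.
  set (A := m + 1 + 2 * INR n).
  assert (HA : 0 < A) by (unfold A; lra).
  destruct (Hl (Rmin 1 (e / (2 * A)))) as [N1 HN1].
  { apply Rmin_pos; [lra|]. apply Rdiv_lt_0_compat; lra. }
  assert (He2 : 0 < e/2) by lra. destruct (small_inv (e / 2) He2) as [N2 HN2].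
  set (k := Nat.max N1 N2).
  specialize (HN1 k (Nat.le_max_l _ _)). specialize (HN2 k (Nat.le_max_r _ _)).
  pose proof (Sy_cont n y l (z k)) as Hc1. rewrite (d_sym d Hm l) in Hc1.
  pose proof (Hzk k).
  set (r := d (z k) l) in *. assert (Hr0 : 0 <= r) by exact (d_nonneg d Hm _ _).
  assert (Hr1 : r <= 1) by (pose proof (Rmin_l 1 (e / (2*A))); lra).
  assert (Hr2 : r <= e / (2 * A)) by (pose proof (Rmin_r 1 (e / (2*A))); lra).
  assert (Hrk : r * A <= e / 2).
  { apply (Rmult_le_compat_r A) in Hr2; [|lra]. unfold Rdiv in Hr2.
    replace (e * / (2 * A) * A) with (e / 2) in Hr2 by (field; lra). lra. }
  set (ik := / (INR k + 1)) in *.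
  assert (0 < ik) by (unfold ik; apply Rinv_0_lt_compat; pose proof (pos_INR k); lra).
  pose proof (Sy_nonneg n y (z k)).
  assert (ik <= 1). { unfold ik. rewrite <- Rinv_1. apply Rinv_le_contravar; [lra| pose proof (pos_INR k); lra]. }
  assert (Sy n y (z k) <= m + 1) by lra.
  assert (r * Sy n y (z k) <= r * (m + 1)) by (apply Rmult_le_compat_l; lra).
  assert (r^2 <= r * 1) by (simpl; apply Rmult_le_compat_l; lra).
  assert (INR n * (r + r^2) <= INR n * (2 * r)) by (apply Rmult_le_compat_l; [apply pos_INR|lra]).
  unfold A in Hrk. lra.
Qed.

Lemma Sy_strong n y z x : (forall w, Sy n y z <= Sy n y w) ->
  Sy n y z + INR n / 4 * (d x z)^2 <= Sy n y x.
Proof.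
  intros Hz. destruct (Hgl z x) as [g [Hg [G0 G1]]].
  assert (Hh : 0 <= /2 <= 1) by lra.
  pose proof (Sy_geo n y g (/2) Hg Hh) as Hs. rewrite G0, G1 in Hs.
  pose proof (Hz (g (/2))). rewrite (d_sym d Hm x z).
  replace (INR n * (/ 2 * (1 - / 2) * d z x ^ 2)) with (INR n / 4 * d z x ^ 2) in Hs by field.
  assert (0 <= INR n / 4 * d z x ^ 2).
  { apply Rmult_le_pos; [apply Rmult_le_pos; [apply pos_INR|lra]|apply pow2_ge_0]. }
  lra.
Qed.

End Bary.

Lemma small_le a K : 0 <= K -> (forall t, 0 < t <= 1 -> a <= t * K) -> a <= 0.
Proof.
  intros HK H. destruct (Rle_lt_dec a 0) as [h|h]; [exact h|].
  set (t := Rmin 1 (a / (K + 1))).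
  assert (Ht : 0 < t <= 1).
  { unfold t. split. apply Rmin_pos; [lra|apply Rdiv_lt_0_compat; lra]. apply Rmin_l. }
  specialize (H t Ht).
  assert (t <= a / (K + 1)) by apply Rmin_r.
  assert (t * K <= a / (K+1) * K) by (apply Rmult_le_compat_r; lra).
  assert (a / (K + 1) * K < a).
  { unfold Rdiv. apply (Rmult_lt_reg_l (K+1)); [lra|].
    replace ((K + 1) * (a * / (K + 1) * K)) with (a * K) by (field; lra). nra. }
  lra.
Qed.

Lemma sumR_affine n (a b : R) (f : nat -> R) :
  sumR n (fun i => a + b * f i) = INR n * a + b * sumR n f.
Proof. induction n; cbn [sumR]. simpl; ring. rewrite IHn, S_INR. ring. Qed.

Lemma Rabs_clamp t s : Rabs (Rmax 0 (Rmin 1 t) - Rmax 0 (Rmin 1 s)) <= Rabs (t - s).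
Proof.
  unfold Rmax, Rmin. repeat destruct Rle_dec; unfold Rabs; repeat destruct Rcase_abs; lra.
Qed.

Section Proj.
Context {X : Type} (d : X -> X -> R) (Hm : is_metric d) (Hc : complete d)
  (Hgl : geodesic_length_space d) (Hn : NPC_ineq d).

Lemma d_lip x a b : Rabs (d x a - d x b) <= d a b.
Proof.
  pose proof (d_tri d Hm x a b). pose proof (d_tri d Hm x b a).
  rewrite (d_sym d Hm b a) in H0. unfold Rabs; destruct Rcase_abs; lra.
Qed.

Lemma proj_spec g x : geodesic d g ->
  exists t, 0 <= t <= 1 /\ proj d g x = g t /\
    forall s, 0 <= s <= 1 -> d x (g t) <= d x (g s).
Proof.
  intros Hg.
  set (f := fun t => d x (g (Rmax 0 (Rmin 1 t)))).
  assert (Hcl : forall t, 0 <= t <= 1 -> Rmax 0 (Rmin 1 t) = t).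
  { intros t Ht. unfold Rmax, Rmin. repeat destruct Rle_dec; lra. }
  assert (Hcl01 : forall t, 0 <= Rmax 0 (Rmin 1 t) <= 1).
  { intros t. unfold Rmax, Rmin. repeat destruct Rle_dec; lra. }
  set (L := d (g 0) (g 1)).
  assert (HL : 0 <= L) by exact (d_nonneg d Hm _ _).
  assert (Hf : forall a b, Rabs (f a - f b) <= L * Rabs (a - b)).
  { intros a b. unfold f. eapply Rle_trans; [apply d_lip|].
    rewrite (Hg _ _ (Hcl01 a) (Hcl01 b)). rewrite (Rmult_comm L).
    apply Rmult_le_compat_r; [exact HL| apply Rabs_clamp]. }
  destruct (continuity_ab_min f 0 1) as [t [Ht1 Ht2]]; [lra| |].
  { intros c _. unfold continuity_pt, continue_in, limit1_in, limit_in.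
    intros eps Heps. exists (eps / (L + 1)). split. apply Rdiv_lt_0_compat; lra.
    intros y [_ Hy]. simpl in *. unfold R_dist in *.
    eapply Rle_lt_trans; [apply Hf|].
    apply Rle_lt_trans with (L * (eps / (L+1))).
    apply Rmult_le_compat_l; [lra|]. lra.
    unfold Rdiv. apply (Rmult_lt_reg_l (L+1)); [lra|].
    replace ((L + 1) * (L * (eps * / (L + 1)))) with (L * eps) by (field; lra). nra. }
  assert (Hex : exists t, 0 <= t <= 1 /\ forall s, 0 <= s <= 1 -> d x (g t) <= d x (g s)).
  { exists t. split; [exact Ht2|]. intros s Hs. specialize (Ht1 s Hs). unfold f in Ht1.
    rewrite !Hcl in Ht1 by auto. exact Ht1. }
  pose proof (epsilon_spec (inhabits 0) _ Hex) as Hsp.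
  exists (epsilon (inhabits 0)
       (fun t => 0 <= t <= 1 /\ forall s, 0 <= s <= 1 -> d x (g t) <= d x (g s))).
  split; [apply Hsp|]. split; [reflexivity|apply Hsp].
Qed.

Lemma proj_ineq g x s : geodesic d g -> 0 <= s <= 1 ->
  (d x (proj d g x))^2 + /2 * (d (proj d g x) (g s))^2 <= (d x (g s))^2.
Proof.
  intros Hg Hs. destruct (proj_spec g x Hg) as [t [Ht [-> Hmin]]].
  pose proof (geo_sub d g t s Hg Ht Hs) as Hh.
  assert (Hh' : 0 <= /2 <= 1) by lra.
  pose proof (Hn x _ (/2) Hh Hh') as N. cbv beta in N.
  replace (t + 0 * (s - t)) with t in N by ring.
  replace (t + 1 * (s - t)) with s in N by ring.
  assert (Hin : 0 <= t + / 2 * (s - t) <= 1) by (split; nra).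
  specialize (Hmin _ Hin).
  pose proof (d_nonneg d Hm x (g t)).
  assert ((d x (g t))^2 <= (d x (g (t + / 2 * (s - t))))^2) by (apply pow_incr; lra).
  lra.
Qed.

Lemma proj_le g x s : geodesic d g -> 0 <= s <= 1 ->
  (d (proj d g x) (g s))^2 <= 2 * (d x (g s))^2.
Proof.
  intros Hg Hs. pose proof (proj_ineq g x s Hg Hs). pose proof (pow2_ge_0 (d x (proj d g x))). lra.
Qed.

Lemma co_convex S : convex d (co d S).
Proof.
  intros x y Hx Hy. destruct (Hgl x y) as [g [Hg [G0 G1]]].
  exists g. split; [exact Hg|]. split; [exact G0|]. split; [exact G1|].
  intros t Ht C HC HS. destruct (HC x y (Hx C HC HS) (Hy C HC HS)) as [h [Hh [H0 [H1 Hin]]]].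
  rewrite (geo_unique d Hm g h Hg Hh Hn) by congruence. auto.
Qed.

Lemma near_proj C b c0 : convex d C -> C c0 ->
  exists D, 0 <= D /\ (forall c, C c -> D <= (d b c)^2) /\
    forall eta, 0 < eta -> exists c, C c /\ (d b c)^2 < D + eta /\
      forall w, C w -> forall t, 0 < t <= 1 ->
        D + (1 - t) * (d c w)^2 <= (d b w)^2 + eta / t.
Proof.
  intros HC Hc00.
  destruct (inf_exists X C (fun c => (d b c)^2) c0 Hc00 (fun c _ => pow2_ge_0 _)) as [D [HD0 [HD1 HD2]]].
  exists D. split; [exact HD0|]. split; [exact HD1|].
  intros eta Heta. destruct (HD2 eta Heta) as [c [Hcc Hbc]]. exists c. split; [exact Hcc|]. split; [exact Hbc|].
  intros w Hw t Ht.
  destruct (HC c w Hcc Hw) as [g [Hg [G0 [G1 Hin]]]].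
  assert (Ht' : 0 <= t <= 1) by lra.
  pose proof (Hn b g t Hg Ht') as N. rewrite G0, G1 in N.
  pose proof (HD1 _ (Hin t Ht')) as Hgt. pose proof (HD1 c Hcc) as Hcd.
  apply (Rmult_le_reg_l t); [lra|].
  replace (t * ((d b w)^2 + eta / t)) with (t * (d b w)^2 + eta) by (field; lra).
  assert ((1 - t) * (d b c ^ 2) <= (1 - t) * (D + eta)) by (apply Rmult_le_compat_l; lra).
  assert ((1 - t) * eta <= eta) by nra.
  lra.
Qed.

Lemma bary_closure C n y z : convex d C -> (1 <= n)%nat -> (forall i, (i < n)%nat -> C (y i)) ->
  (forall w, Sy d n y z <= Sy d n y w) ->
  forall eps, 0 < eps -> exists c, C c /\ d z c < eps.
Proof.
  intros HC Hn1 Hy Hz.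
  assert (HnR : 1 <= INR n) by (apply (le_INR 1); auto).
  destruct (near_proj C z (y 0%nat) HC (Hy 0%nat ltac:(lia))) as [D [HD0 [HD1 HD2]]].
  assert (HnD : INR n * D <= 0).
  { apply (small_le (INR n * D) (2 * Sy d n y z + 5 * INR n)).
    { pose proof (Sy_nonneg d n y z). lra. }
    intros t Ht.
    destruct (HD2 (t^2)) as [c [Hc1 [_ Hw]]]. { pose proof (pow_lt t 2). apply pow_lt; lra. }
    assert (S1 : sumR n (fun i => D + (1-t) * (d c (y i))^2) <= sumR n (fun i => t + 1 * (d z (y i))^2)).
    { apply sumR_le. intros i Hi. pose proof (Hw _ (Hy i Hi) t Ht) as H.
      replace (t^2/t) with t in H by (field; lra). lra. }
    assert (S2 : sumR n (fun i => D + (1-/2) * (d c (y i))^2) <= sumR n (fun i => 2 * t^2 + 1 * (d z (y i))^2)).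
    { apply sumR_le. intros i Hi. assert (Hh : 0 < /2 <= 1) by lra. pose proof (Hw _ (Hy i Hi) (/2) Hh) as H.
      replace (t^2/ /2) with (2 * t^2) in H by (field; lra). lra. }
    rewrite !sumR_affine in S1, S2. fold (Sy d n y c) in S1, S2. fold (Sy d n y z) in S1, S2.
    rewrite !Rmult_1_l in S1, S2.
    pose proof (Hz c).
    assert (HnD0 : 0 <= INR n * D) by (apply Rmult_le_pos; [apply pos_INR|lra]).
    assert (Hsc : Sy d n y c <= 2 * Sy d n y z + 4 * (INR n * t^2)) by lra.
    assert (Ht2 : t^2 <= 1) by (simpl; nra).
    assert (HnT : INR n * t^2 <= INR n) by (rewrite <- (Rmult_1_r (INR n)) at 2; apply Rmult_le_compat_l; [apply pos_INR|lra]).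
    assert (t * Sy d n y c <= t * (2 * Sy d n y z + 4 * INR n)) by (apply Rmult_le_compat_l; lra).
    assert (INR n * D <= t * Sy d n y c + INR n * t) by nra.
    nra. }
  assert (HD : D = 0) by nra.
  intros eps Heps. destruct (HD2 (eps^2)) as [c [Hc1 [Hc2 _]]]. { apply pow_lt; lra. }
  exists c. split; [exact Hc1|]. rewrite HD, Rplus_0_l in Hc2.
  pose proof (d_nonneg d Hm z c). apply Rnot_le_lt. intros Hle.
  assert (eps^2 <= (d z c)^2) by (apply pow_incr; lra). lra.
Qed.

End Proj.

Section Main.
Context {X : Type} (d : X -> X -> R) (T : X -> X) (Hm : is_metric d) (Hc : complete d)
  (Hgl : geodesic_length_space d) (Hn : NPC_ineq d) (HT : nonexpansive d T)
  (HDC : distance_convex d T).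

Definition orb (r : X) : nat -> X := fun i => Nat.iter i T r.

Lemma mn_min n r : (1 <= n)%nat -> forall w, Sy d n (orb r) (m_n d T n r) <= Sy d n (orb r) w.
Proof.
  intros Hn1. assert (Hn0 : 0 < INR n) by (apply lt_0_INR; lia).
  destruct (Sy_min_exists d Hm Hc Hgl Hn n (orb r) Hn1) as [z Hz].
  assert (Hex : exists m, forall r', Fn d T n m r <= Fn d T n r' r).
  { exists z. intros r'. unfold Fn. apply Rmult_le_compat_l.
    left; apply Rinv_0_lt_compat; lra. apply Hz. }
  pose proof (epsilon_spec (inhabits r) _ Hex) as Hs.
  intros w. specialize (Hs w). fold (m_n d T n r) in Hs. unfold Fn in Hs.
  apply Rmult_le_reg_l with (/ INR n). apply Rinv_0_lt_compat; lra. exact Hs.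
Qed.

Lemma iter_nonexp i r r' : d (Nat.iter i T r) (Nat.iter i T r') <= d r r'.
Proof.
  induction i; simpl. lra. eapply Rle_trans; [apply HT|exact IHi].
Qed.

Lemma iter_fix i q : T q = q -> Nat.iter i T q = q.
Proof. intros Hq. induction i; simpl; [reflexivity|]. rewrite IHi. exact Hq. Qed.

Lemma Sy_shift n r x :
  Sy d n (orb (T r)) x = Sy d n (orb r) x - (d x r)^2 + (d x (Nat.iter n T r))^2.
Proof.
  unfold Sy, orb.
  rewrite (sumR_ext n (fun i => d x (Nat.iter i T (T r)) ^ 2)
             (fun i => (fun j => d x (Nat.iter j T r) ^ 2) (S i))).
  rewrite (sumR_shift n (fun j => d x (Nat.iter j T r) ^ 2)). reflexivity.
  intros i _. rewrite <- Nat.iter_succ_r. reflexivity.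
Qed.

Lemma Sy_orbit_bound n r B : (forall i, d r (Nat.iter i T r) <= B) ->
  Sy d n (orb r) r <= INR n * B^2.
Proof.
  intros HB. rewrite <- sumR_const. unfold Sy, orb. apply sumR_le.
  intros i _. pose proof (d_nonneg d Hm r (Nat.iter i T r)). apply pow_incr. split; auto.
Qed.

Lemma mn_near n r B : (1 <= n)%nat -> (forall i, d r (Nat.iter i T r) <= B) ->
  d (m_n d T n r) r <= 2 * B.
Proof.
  intros Hn1 HB. set (a := m_n d T n r).
  assert (Hn0 : 1 <= INR n) by (apply (le_INR 1); auto).
  assert (HB0 : 0 <= B) by (specialize (HB 0%nat); simpl in HB; rewrite (d_refl d Hm) in HB; lra).
  pose proof (mn_min n r Hn1 r) as H1. fold a in H1.
  pose proof (Sy_orbit_bound n r B HB).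
  assert (H2 : sumR n (fun _ => (d a r)^2) <= sumR n (fun i => 2 * B^2 + 2 * (d a (orb r i))^2)).
  { apply sumR_le. intros i _. pose proof (d_tri d Hm a (orb r i) r).
    pose proof (HB i) as H3. rewrite (d_sym d Hm r) in H3. unfold orb in *.
    pose proof (d_nonneg d Hm a (Nat.iter i T r)). pose proof (d_nonneg d Hm (Nat.iter i T r) r).
    pose proof (d_nonneg d Hm a r).
    assert ((d a r)^2 <= (d a (Nat.iter i T r) + d (Nat.iter i T r) r)^2) by (apply pow_incr; lra).
    assert ((d (Nat.iter i T r) r)^2 <= B^2) by (apply pow_incr; lra).
    pose proof (pow2_ge_0 (d a (Nat.iter i T r) - d (Nat.iter i T r) r)). nra. }
  rewrite sumR_const, sumR_affine in H2. fold (Sy d n (orb r) a) in H2.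
  assert (H4 : INR n * (d a r)^2 <= INR n * (4 * B^2)) by lra.
  apply Rmult_le_reg_l in H4; [|lra].
  pose proof (d_nonneg d Hm a r). nra.
Qed.


Lemma div_helper n x K : 0 < INR n -> INR n / 4 * x <= K -> x <= 4 * K / INR n.
Proof.
  intros Hn0 H. apply (Rmult_le_reg_l (INR n)); [lra|].
  replace (INR n * (4 * K / INR n)) with (4 * K) by (field; lra). lra.
Qed.

Lemma orbT_bound r B : (forall i, d r (Nat.iter i T r) <= B) ->
  forall i, d (T r) (Nat.iter i T (T r)) <= 2 * B.
Proof.
  intros HB i. rewrite <- Nat.iter_succ_r.
  pose proof (d_tri d Hm (T r) r (Nat.iter (S i) T r)).
  pose proof (HB 1%nat). simpl in H0. rewrite (d_sym d Hm r) in H0.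
  pose proof (HB (S i)). lra.
Qed.

Lemma mn_shift n r B : (1 <= n)%nat -> (forall i, d r (Nat.iter i T r) <= B) ->
  (d (m_n d T n (T r)) (m_n d T n r))^2 <= 136 * B^2 / INR n.
Proof.
  intros Hn1 HB. assert (Hn0 : 1 <= INR n) by (apply (le_INR 1); auto).
  assert (HB0 : 0 <= B) by (specialize (HB 0%nat); simpl in HB; rewrite (d_refl d Hm) in HB; lra).
  set (a := m_n d T n r). set (b := m_n d T n (T r)).
  pose proof (mn_near n r B Hn1 HB) as Ha. fold a in Ha.
  pose proof (mn_near n (T r) (2 * B) Hn1 (orbT_bound r B HB)) as Hb. fold b in Hb.
  pose proof (Sy_strong d Hm Hgl Hn n (orb r) a b (mn_min n r Hn1)) as S1.
  pose proof (mn_min n (T r) Hn1 a) as S2. fold b in S2.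
  rewrite !Sy_shift in S2.
  assert (E1 : d a (Nat.iter n T r) <= 3 * B).
  { pose proof (d_tri d Hm a r (Nat.iter n T r)). pose proof (HB n). lra. }
  assert (E2 : d b r <= 5 * B).
  { pose proof (d_tri d Hm b (T r) r). pose proof (HB 1%nat) as H0. simpl in H0. rewrite (d_sym d Hm r) in H0. lra. }
  pose proof (d_nonneg d Hm a (Nat.iter n T r)). pose proof (d_nonneg d Hm b r).
  assert ((d a (Nat.iter n T r))^2 <= (3*B)^2) by (apply pow_incr; lra).
  assert ((d b r)^2 <= (5*B)^2) by (apply pow_incr; lra).
  pose proof (pow2_ge_0 (d a r)). pose proof (pow2_ge_0 (d b (Nat.iter n T r))).
  replace (136 * B^2 / INR n) with (4 * (34 * B^2) / INR n) by (field; lra).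
  apply div_helper; [lra|]. lra.
Qed.

Lemma mn_Tclose n p B : (1 <= n)%nat -> (forall i, d p (Nat.iter i T p) <= B) ->
  (d (T (m_n d T n p)) (m_n d T n p))^2 <= 36 * B^2 / INR n.
Proof.
  intros Hn1 HB. assert (Hn0 : 1 <= INR n) by (apply (le_INR 1); auto).
  assert (HB0 : 0 <= B) by (specialize (HB 0%nat); simpl in HB; rewrite (d_refl d Hm) in HB; lra).
  set (a := m_n d T n p).
  pose proof (mn_near n p B Hn1 HB) as Ha. fold a in Ha.
  pose proof (Sy_strong d Hm Hgl Hn n (orb p) a (T a) (mn_min n p Hn1)) as S1.
  pose proof (Sy_shift n p (T a)) as S2.
  assert (S3 : Sy d n (orb (T p)) (T a) <= Sy d n (orb p) a).
  { unfold Sy, orb. apply sumR_le. intros i _. rewrite <- Nat.iter_succ_r, Nat.iter_succ.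
    pose proof (HT a (Nat.iter i T p)). pose proof (d_nonneg d Hm (T a) (T (Nat.iter i T p))).
    apply pow_incr. lra. }
  assert (E1 : d (T a) p <= 3 * B).
  { pose proof (d_tri d Hm (T a) (T p) p) as G1. pose proof (HT a p) as G2. pose proof (HB 1%nat) as G3. simpl in G3.
    rewrite (d_sym d Hm p) in G3. lra. }
  pose proof (d_nonneg d Hm (T a) p).
  assert ((d (T a) p)^2 <= (3*B)^2) by (apply pow_incr; lra).
  pose proof (pow2_ge_0 (d (T a) (Nat.iter n T p))).
  replace (36 * B^2 / INR n) with (4 * (9 * B^2) / INR n) by (field; lra).
  apply div_helper; [lra|]. lra.
Qed.

Lemma mn_fix_close n y q e : (1 <= n)%nat -> T q = q -> d y q <= e ->
  d (m_n d T n y) q <= 2 * e.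
Proof.
  intros Hn1 Hq Hy. assert (Hn0 : 1 <= INR n) by (apply (le_INR 1); auto).
  set (a := m_n d T n y).
  pose proof (mn_min n y Hn1 q) as S1. fold a in S1.
  assert (S2 : Sy d n (orb y) q <= INR n * e^2).
  { rewrite <- sumR_const. unfold Sy, orb. apply sumR_le. intros i _.
    rewrite <- (iter_fix i q Hq) at 1. pose proof (iter_nonexp i q y).
    pose proof (d_nonneg d Hm (Nat.iter i T q) (Nat.iter i T y)). rewrite (d_sym d Hm q) in H.
    apply pow_incr. lra. }
  pose proof (d_nonneg d Hm y q).
  apply Rnot_lt_le. intros HD.
  assert (S3 : sumR n (fun _ => (d a q - e)^2) <= Sy d n (orb y) a).
  { unfold Sy, orb. apply sumR_le. intros i _.
    pose proof (d_tri d Hm a (Nat.iter i T y) q).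
    rewrite <- (iter_fix i q Hq) in H0 at 2. pose proof (iter_nonexp i y q).
    apply pow_incr. lra. }
  rewrite sumR_const in S3.
  assert (H5 : (d a q - e)^2 <= e^2).
  { apply (Rmult_le_reg_l (INR n)); lra. }
  assert (e^2 < (d a q - e)^2) by (simpl; nra).
  lra.
Qed.

End Main.

Lemma div_nonneg a b : 0 <= a -> 0 < b -> 0 <= a / b.
Proof. intros; unfold Rdiv; apply Rmult_le_pos; [|left; apply Rinv_0_lt_compat]; auto. Qed.

Lemma eventually_sq K e : 0 <= K -> 0 < e -> exists N, forall n, (N <= n)%nat ->
  (1 <= n)%nat /\ forall x, 0 <= x -> x^2 <= K / INR n -> x < e.
Proof.
  intros HK He. assert (He2 : 0 < e^2 / (K + 1)) by (apply Rdiv_lt_0_compat; [apply pow_lt|]; lra).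
  destruct (small_inv _ He2) as [N0 HN0]. exists (S N0). intros n Hn.
  split; [lia|]. intros x Hx Hx2.
  destruct n as [|k]; [lia|]. rewrite S_INR in Hx2.
  specialize (HN0 k ltac:(lia)).
  assert (Hk : 0 < INR k + 1) by (pose proof (pos_INR k); lra).
  assert (K / (INR k + 1) <= K * (e^2 / (K+1))).
  { unfold Rdiv. apply Rmult_le_compat_l; [lra|]. lra. }
  assert (K * (e^2 / (K+1)) < e^2).
  { apply (Rmult_lt_reg_l (K+1)); [lra|].
    replace ((K + 1) * (K * (e ^ 2 / (K + 1)))) with (K * e^2) by (field; lra).
    assert (0 < e^2) by (apply pow_lt; lra). nra. }
  apply Rnot_le_lt. intros Hle. assert (e^2 <= x^2) by (apply pow_incr; lra). lra.
Qed.

Section Main2.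
Context {X : Type} (d : X -> X -> R) (T : X -> X) (Hm : is_metric d) (Hc : complete d)
  (Hgl : geodesic_length_space d) (Hn : NPC_ineq d) (HT : nonexpansive d T)
  (HDC : distance_convex d T) (p : X) (M : R) (HM : forall i, d p (Nat.iter i T p) <= M).

Let mm n := m_n d T n p.

Lemma M_nonneg : 0 <= M.
Proof. specialize (HM 0%nat). simpl in HM. rewrite (d_refl d Hm) in HM. lra. Qed.

Lemma orbit_pt_bound k : forall i, d (Nat.iter k T p) (Nat.iter i T (Nat.iter k T p)) <= 2 * M.
Proof.
  intros i. rewrite <- Nat.iter_add.
  pose proof (d_tri d Hm (Nat.iter k T p) p (Nat.iter (i + k) T p)).
  pose proof (HM k). pose proof (HM (i + k)%nat). rewrite (d_sym d Hm p) in H0. lra.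
Qed.

Definition K0 := 136 * (2 * M)^2.

Lemma mn_orbit k n : (1 <= n)%nat ->
  d (m_n d T n (Nat.iter k T p)) (m_n d T n p) <= INR k * sqrt (K0 / INR n).
Proof.
  intros Hn1. induction k.
  - simpl. rewrite (d_refl d Hm). lra.
  - rewrite Nat.iter_succ, S_INR.
    pose proof (d_tri d Hm (m_n d T n (T (Nat.iter k T p))) (m_n d T n (Nat.iter k T p)) (m_n d T n p)).
    pose proof (mn_shift d T Hm Hc Hgl Hn n (Nat.iter k T p) (2 * M) Hn1 (orbit_pt_bound k)) as Hs.
    assert (d (m_n d T n (T (Nat.iter k T p))) (m_n d T n (Nat.iter k T p)) <= sqrt (K0 / INR n)).
    { rewrite <- (sqrt_pow2 (d _ _)) by apply (d_nonneg d Hm). apply sqrt_le_1_alt.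
      unfold K0. unfold Rdiv in *. lra. }
    lra.
Qed.

Definition Eset (r : X) : Prop := exists K, forall n, (1 <= n)%nat ->
  (d (m_n d T n r) (m_n d T n p))^2 <= K / INR n.

Lemma Eset_K r K : (forall n, (1 <= n)%nat -> (d (m_n d T n r) (m_n d T n p))^2 <= K / INR n) -> 0 <= K.
Proof. intros H. specialize (H 1%nat (le_n 1)). simpl in H. pose proof (pow2_ge_0 (d (m_n d T 1 r) (m_n d T 1 p))).
  unfold Rdiv in H. rewrite Rinv_1 in H. lra. Qed.

Lemma Eset_convex : convex d Eset.
Proof.
  intros a b [K1 H1] [K2 H2]. destruct (Hgl a b) as [g [Hg [G0 G1]]].
  exists g. split; [exact Hg|]. split; [exact G0|]. split; [exact G1|].
  intros t Ht. exists (K1 + K2). intros n Hn1.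
  pose proof (Eset_K _ _ H1). pose proof (Eset_K _ _ H2).
  assert (Hn0 : 0 < INR n) by (apply lt_0_INR; lia).
  pose proof (HDC n (m_n d T n p) Hn1 g Hg 0 1 t ltac:(lra) ltac:(lra) Ht) as Hcv.
  cbv beta in Hcv. replace ((1 - t) * 0 + t * 1) with t in Hcv by ring.
  rewrite G0, G1 in Hcv. specialize (H1 n Hn1). specialize (H2 n Hn1).
  assert ((1 - t) * (d (m_n d T n a) (m_n d T n p))^2 <= (1 - t) * (K1 / INR n)) by (apply Rmult_le_compat_l; lra).
  assert (t * (d (m_n d T n b) (m_n d T n p))^2 <= t * (K2 / INR n)) by (apply Rmult_le_compat_l; lra).
  assert (0 <= K1 / INR n) by (apply div_nonneg; lra).
  assert (0 <= K2 / INR n) by (apply div_nonneg; lra).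
  assert ((1 - t) * (K1 / INR n) <= K1 / INR n) by nra.
  assert (t * (K2 / INR n) <= K2 / INR n) by nra.
  unfold Rdiv in *. rewrite Rmult_plus_distr_r. lra.
Qed.

Lemma Eset_orbit x : orbit T p x -> Eset x.
Proof.
  intros [k ->]. exists ((INR k)^2 * K0). intros n Hn1.
  assert (Hn0 : 0 < INR n) by (apply lt_0_INR; lia).
  pose proof (mn_orbit k n Hn1) as H. pose proof (d_nonneg d Hm (m_n d T n (Nat.iter k T p)) (m_n d T n p)).
  assert (HK0 : 0 <= K0) by (unfold K0; nra).
  pose proof (pow_incr _ _ 2 (conj H0 H)) as H2.
  rewrite Rpow_mult_distr, pow2_sqrt in H2 by (apply div_nonneg; lra).
  unfold Rdiv in *. lra.
Qed.

End Main2.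

Lemma lt_from_sq x e : 0 <= x -> 0 < e -> x^2 < e^2 -> x < e.
Proof. intros. apply Rnot_le_lt. intros Hle. assert (e^2 <= x^2) by (apply pow_incr; lra). lra. Qed.

Section Main3.
Context {X : Type} (d : X -> X -> R) (T : X -> X) (Hm : is_metric d) (Hc : complete d)
  (Hgl : geodesic_length_space d) (Hn : NPC_ineq d) (HT : nonexpansive d T)
  (HDC : distance_convex d T) (p : X) (M : R) (HM : forall i, d p (Nat.iter i T p) <= M).

Let mm n := m_n d T n p.

Definition strong_cluster (u : nat -> X) q := forall eps, 0 < eps -> forall N, exists n, (N <= n)%nat /\ d (u n) q < eps.

Lemma co_orb i : co d (orbit T p) (orb T p i).
Proof. intros C _ HS. apply HS. exists i. reflexivity. Qed.

Lemma L1 q : T q = q -> closed_co d (orbit T p) q -> seq_cvg d mm q.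
Proof.
  intros Hq Hcl eps Heps. set (e := eps / 4).
  destruct (Hcl e) as [y [Hy Hqy]]; [unfold e; lra|].
  assert (Ey : Eset d T p y) by (apply Hy; [apply Eset_convex; auto| apply (Eset_orbit d T Hm Hc Hgl Hn p M HM)]).
  destruct Ey as [K HK]. pose proof (Eset_K d T p y K HK) as HK0.
  destruct (eventually_sq K e HK0) as [N HN]; [unfold e; lra|].
  exists N. intros n Hn1. destruct (HN n Hn1) as [Hn1' Hsm].
  pose proof (Hsm _ (d_nonneg d Hm _ _) (HK n Hn1')) as H1.
  rewrite (d_sym d Hm q) in Hqy.
  pose proof (mn_fix_close d T Hm Hc Hgl Hn HT n y q e Hn1' Hq ltac:(lra)) as H2.
  pose proof (d_tri d Hm (mm n) (m_n d T n y) q). unfold mm in *.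
  rewrite (d_sym d Hm (m_n d T n p) (m_n d T n y)) in H. unfold e in *. lra.
Qed.

Lemma L2 q : strong_cluster mm q -> T q = q /\ closed_co d (orbit T p) q.
Proof.
  intros Hcl. pose proof (M_nonneg d T Hm p M HM) as HM0. split.
  - apply (d_le_eps d Hm). intros e He.
    destruct (eventually_sq (36 * M^2) (e/3)) as [N1 HN1]; [nra|lra|].
    destruct (Hcl (e/3) ltac:(lra) N1) as [n [Hn1 Hd]].
    destruct (HN1 n Hn1) as [Hn1' Hsm].
    pose proof (Hsm _ (d_nonneg d Hm _ _) (mn_Tclose d T Hm Hc Hgl Hn HT n p M Hn1' HM)) as H1.
    unfold mm in *.
    pose proof (d_tri d Hm (T q) (T (m_n d T n p)) q).
    pose proof (d_tri d Hm (T (m_n d T n p)) (m_n d T n p) q).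
    pose proof (HT q (m_n d T n p)). rewrite (d_sym d Hm q) in H2. lra.
  - intros e He. destruct (Hcl (e/2) ltac:(lra) 1%nat) as [n [Hn1 Hd]].
    destruct (bary_closure d Hm Hn (co d (orbit T p)) n (orb T p) (mm n) (co_convex d Hm Hgl Hn _) Hn1
      (fun i _ => co_orb i) (mn_min d T Hm Hc Hgl Hn n p Hn1) (e/2) ltac:(lra)) as [c [Hc1 Hc2]].
    exists c. split; [exact Hc1|].
    pose proof (d_tri d Hm q (mm n) c). rewrite (d_sym d Hm q (mm n)) in H. lra.
Qed.

Lemma proj_close g s x q : geodesic d g -> 0 <= s <= 1 -> g s = q -> forall e, 0 < e ->
  d x q < e / 2 -> d (proj d g x) q < e.
Proof.
  intros Hg Hs Hgs e He Hx. pose proof (proj_le d Hm Hn g x s Hg Hs). rewrite Hgs in H.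
  apply lt_from_sq; [apply (d_nonneg d Hm)|lra|].
  pose proof (d_nonneg d Hm x q).
  assert ((d x q)^2 < (e/2)^2) by (simpl; nra).
  nra.
Qed.


Lemma L3 q : seq_cvg d mm q -> weak_cvg d mm q.
Proof.
  intros Hcv g Hg [s [Hs Hgs]] eps Heps. destruct (Hcv (eps/2) ltac:(lra)) as [N HN].
  exists N. intros n Hn1. apply (proj_close g s); auto.
Qed.

Lemma L4 q : seq_cvg d mm q -> weak_cluster d mm q.
Proof.
  intros Hcv eps Heps N. destruct (Hcv (eps/2) ltac:(lra)) as [N1 HN1].
  exists (Nat.max N N1). split; [lia|]. intros g Hg [s [Hs Hgs]].
  apply (proj_close g s); auto. apply HN1. lia.
Qed.

Lemma L5 q : weak_cluster d mm q -> strong_cluster mm q.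
Proof.
  intros Hw eps Heps N. destruct (Hw eps Heps N) as [n [Hn1 Hall]]. exists n. split; [exact Hn1|].
  destruct (Hgl q (mm n)) as [g [Hg [G0 G1]]].
  specialize (Hall g Hg (ex_intro _ 0 (conj (conj (Rle_refl 0) Rle_0_1) G0))).
  destruct (proj_spec d Hm g (mm n) Hg) as [t [Ht [Hpr Hmin]]].
  specialize (Hmin 1 ltac:(lra)). rewrite G1, (d_refl d Hm) in Hmin.
  assert (E : g t = mm n).
  { apply (d_eq d Hm). rewrite (d_sym d Hm). pose proof (d_nonneg d Hm (mm n) (g t)). lra. }
  rewrite Hpr, E in Hall. exact Hall.
Qed.


Lemma le_from_sq x y : 0 <= x -> 0 <= y -> x^2 <= y^2 -> x <= y.
Proof. intros. apply Rnot_lt_le. intros Hl. assert (y^2 < x^2) by (simpl; nra). lra. Qed.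


Lemma L6a q : weak_cvg d mm q -> T q = q.
Proof.
  intros Hw. pose proof (M_nonneg d T Hm p M HM) as HM0.
  pose proof (d_nonneg d Hm q (T q)) as HD0. set (D := d q (T q)) in *.
  destruct (Rle_lt_dec D 0) as [h|h].
  { symmetry. apply (d_eq d Hm). fold D. lra. }
  exfalso.
  destruct (Hgl q (T q)) as [g [Hg [G0 G1]]].
  set (R0 := 2 * M + d p q). assert (HR0 : 0 <= R0) by (unfold R0; pose proof (d_nonneg d Hm p q); lra).
  set (rho := Rmin 1 (Rmin (D/2) (D^2/(64*(R0+1))))).
  assert (Hrho : 0 < rho).
  { unfold rho. apply Rmin_pos; [lra|]. apply Rmin_pos; [lra|]. apply Rdiv_lt_0_compat; [nra|lra]. }
  assert (Hr1 : rho <= 1) by apply Rmin_l.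
  assert (Hr2 : rho <= D/2) by (unfold rho; eapply Rle_trans; [apply Rmin_r|apply Rmin_l]).
  assert (Hr3 : rho <= D^2/(64*(R0+1))) by (unfold rho; eapply Rle_trans; [apply Rmin_r|apply Rmin_r]).
  destruct (Hw g Hg (ex_intro _ 0 (conj (conj (Rle_refl 0) Rle_0_1) G0)) rho Hrho) as [N1 HN1].
  destruct (eventually_sq (36 * M^2) rho) as [N2 HN2]; [nra|lra|].
  set (n := Nat.max N1 N2). destruct (HN2 n ltac:(unfold n; lia)) as [Hn1 Hsm].
  specialize (HN1 n ltac:(unfold n; lia)). cbv beta in HN1.
  pose proof (Hsm _ (d_nonneg d Hm _ _) (mn_Tclose d T Hm Hc Hgl Hn HT n p M Hn1 HM)) as He.
  fold (mm n) in He.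
  set (m := mm n) in *. set (pi := proj d g m) in *. set (a := d m pi).
  pose proof (proj_ineq d Hm Hn g m 1 Hg ltac:(lra)) as P1. rewrite G1 in P1. fold pi a in P1.
  pose proof (proj_ineq d Hm Hn g m 0 Hg ltac:(lra)) as P0. rewrite G0 in P0. fold pi a in P0.
  assert (Bm : d m q <= R0).
  { pose proof (mn_near d T Hm Hc Hgl Hn n p M Hn1 HM). fold (mm n) m in H.
    pose proof (d_tri d Hm m p q). unfold R0. lra. }
  assert (Ha0 : 0 <= a) by apply (d_nonneg d Hm).
  assert (HaR : a <= R0).
  { apply le_from_sq; auto. pose proof (pow2_ge_0 (d pi q)).
    assert ((d m q)^2 <= R0^2) by (apply pow_incr; split; [apply (d_nonneg d Hm)|exact Bm]). lra. }
  assert (T1 : d m (T q) <= d (T m) m + d m q).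
  { pose proof (d_tri d Hm m (T m) (T q)). pose proof (HT m q). rewrite (d_sym d Hm m (T m)) in H. lra. }
  assert (T2 : d m q <= a + d pi q) by apply (d_tri d Hm).
  assert (T3 : D <= d pi q + d pi (T q)).
  { pose proof (d_tri d Hm q pi (T q)). rewrite (d_sym d Hm q pi) in H. unfold D. lra. }
  assert (Q1 : (D/2)^2 <= (d pi (T q))^2) by (apply pow_incr; lra).
  assert (Q2 : (d m (T q))^2 <= (a + 2 * rho)^2).
  { apply pow_incr. split; [apply (d_nonneg d Hm)|lra]. }
  assert (Q3 : rho * (R0 + 1) <= D^2/64).
  { apply (Rmult_le_compat_r (R0+1)) in Hr3; [|lra].
    replace (D ^ 2 / (64 * (R0 + 1)) * (R0 + 1)) with (D^2/64) in Hr3 by (field; lra). exact Hr3. }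
  assert (Q4 : a * rho <= R0 * rho) by (apply Rmult_le_compat_r; lra).
  assert (Q5 : rho * rho <= rho) by nra.
  assert (0 < D^2) by nra.
  simpl in *. nra.
Qed.


Lemma closure_ineq (C : X -> Prop) A al b c w beta : 0 <= al <= 1 ->
  (forall r, 0 < r -> exists w', C w' /\ d w w' < r) ->
  (forall w', C w' -> A + al * (d c w')^2 <= (d b w')^2 + beta) ->
  A + al * (d c w)^2 <= (d b w)^2 + beta.
Proof.
  intros Hal Hcl Hp.
  pose proof (d_nonneg d Hm c w) as HX0. pose proof (d_nonneg d Hm b w) as HY0.
  set (Xc := d c w) in *. set (Yb := d b w) in *.
  assert (HK : 0 <= 2 * Xc + 2 * Yb + 4) by lra.
  assert (H : A + al * Xc^2 - Yb^2 - beta <= 0).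
  { apply (small_le _ _ HK). intros t Ht.
    destruct (Hcl t ltac:(lra)) as [w' [Hw' Hd]]. specialize (Hp w' Hw').
    pose proof (d_nonneg d Hm w w') as Hr0.
    pose proof (d_nonneg d Hm c w') as HX'. pose proof (d_nonneg d Hm b w') as HY'.
    pose proof (d_tri d Hm c w' w) as H1. rewrite (d_sym d Hm w' w) in H1.
    pose proof (d_tri d Hm c w w') as H2. pose proof (d_tri d Hm b w w') as H3.
    fold Xc in H1, H2. fold Yb in H3.
    set (r := d w w') in *. set (X' := d c w') in *. set (Y' := d b w') in *.
    assert (E1 : Xc^2 <= X'^2 + r * (2 * Xc + 3)).
    { assert (Xc^2 <= (X' + r)^2) by (apply pow_incr; lra).
      assert (r * X' <= r * (Xc + 1)) by (apply Rmult_le_compat_l; lra).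
      assert (r * r <= r * 1) by (apply Rmult_le_compat_l; lra). simpl in *. nra. }
    assert (E2 : al * Xc^2 <= al * X'^2 + r * (2 * Xc + 3)).
    { assert (al * Xc^2 <= al * (X'^2 + r * (2 * Xc + 3))) by (apply Rmult_le_compat_l; lra).
      assert (al * (r * (2 * Xc + 3)) <= 1 * (r * (2 * Xc + 3))) by (apply Rmult_le_compat_r; [nra|lra]).
      lra. }
    assert (E3 : Y'^2 <= Yb^2 + r * (2 * Yb + 1)).
    { assert (Y'^2 <= (Yb + r)^2) by (apply pow_incr; lra).
      assert (r * r <= r * 1) by (apply Rmult_le_compat_l; lra). simpl in *. nra. }
    assert (E4 : r * (2 * Xc + 2 * Yb + 4) <= t * (2 * Xc + 2 * Yb + 4)) by (apply Rmult_le_compat_r; lra).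
    lra. }
  lra.
Qed.

Lemma L6b q : weak_cvg d mm q -> closed_co d (orbit T p) q.
Proof.
  intros Hw. pose proof (M_nonneg d T Hm p M HM) as HM0.
  destruct (classic (closed_co d (orbit T p) q)) as [h|h]; [exact h|exfalso].
  unfold closed_co in h. apply not_all_ex_not in h as [eps0 h].
  apply imply_to_and in h as [Heps0 h].
  assert (Hfar : forall y, co d (orbit T p) y -> eps0 <= d q y).
  { intros y Hy. apply Rnot_lt_le. intros Hl. apply h. exists y. auto. }
  set (C := co d (orbit T p)) in *.
  assert (HCc : convex d C) by apply (co_convex d Hm Hgl Hn).
  destruct (near_proj d Hn C q p HCc (co_orb 0%nat)) as [D [HD0 [HD1 HD2]]].
  assert (HDp : eps0^2 <= D).
  { apply Rnot_lt_le. intros Hl. destruct (HD2 (eps0^2 - D) ltac:(lra)) as [c [Hc1 [Hc2 _]]].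
    specialize (Hfar c Hc1). assert (eps0^2 <= (d q c)^2) by (apply pow_incr; lra). lra. }
  assert (HDpos : 0 < D) by (assert (0 < eps0^2) by (apply pow_lt; lra); lra).
  set (R0 := 2 * M + d p q). assert (HR0 : 0 <= R0) by (unfold R0; pose proof (d_nonneg d Hm p q); lra).
  set (t := Rmin 1 (D / (4 * (R0^2 + 1)))).
  assert (Ht : 0 < t <= 1).
  { split. apply Rmin_pos; [lra|]. apply Rdiv_lt_0_compat; [lra|]. nra. apply Rmin_l. }
  assert (HtR : t * R0^2 <= D / 4).
  { assert (t <= D / (4 * (R0^2 + 1))) by apply Rmin_r.
    assert (t * R0^2 <= D / (4 * (R0^2 + 1)) * R0^2) by (apply Rmult_le_compat_r; [nra|lra]).
    assert (D / (4 * (R0^2 + 1)) * R0^2 <= D / 4).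
    { apply (Rmult_le_reg_l (4 * (R0^2+1))); [nra|].
      replace (4 * (R0 ^ 2 + 1) * (D / (4 * (R0 ^ 2 + 1)) * R0 ^ 2)) with (D * R0^2) by (field; nra).
      replace (4 * (R0 ^ 2 + 1) * (D / 4)) with (D * (R0^2 + 1)) by field. nra. }
    lra. }
  destruct (HD2 (t * D / 4)) as [c [Hc1 [_ Hwc]]]. { apply Rdiv_lt_0_compat; nra. }
  destruct (Hgl q c) as [g [Hg [G0 G1]]].
  set (rho := Rmin 1 (D / (4 * (2 * R0 + 1)))).
  assert (Hrho : 0 < rho) by (apply Rmin_pos; [lra|]; apply Rdiv_lt_0_compat; lra).
  assert (Hr1 : rho <= 1) by apply Rmin_l.
  assert (Hr2 : rho * (2 * R0 + 1) <= D / 4).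
  { assert (rho <= D / (4 * (2 * R0 + 1))) by apply Rmin_r.
    apply (Rmult_le_compat_r (2*R0+1)) in H; [|lra].
    replace (D / (4 * (2 * R0 + 1)) * (2 * R0 + 1)) with (D / 4) in H by (field; lra). exact H. }
  destruct (Hw g Hg (ex_intro _ 0 (conj (conj (Rle_refl 0) Rle_0_1) G0)) rho Hrho) as [N1 HN1].
  set (n := Nat.max N1 1). assert (Hn1 : (1 <= n)%nat) by (unfold n; lia).
  specialize (HN1 n ltac:(unfold n; lia)). cbv beta in HN1.
  set (m := mm n) in *. set (pi := proj d g m) in *. set (a := d m pi).
  assert (Hcl : forall r, 0 < r -> exists w', C w' /\ d m w' < r).
  { intros r Hr. apply (bary_closure d Hm Hn C n (orb T p) m HCc Hn1 (fun i _ => co_orb i)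
      (mn_min d T Hm Hc Hgl Hn n p Hn1) r Hr). }
  assert (Hm1 : D + (1 - t) * (d c m)^2 <= (d q m)^2 + t * D / 4 / t).
  { apply (closure_ineq C); [lra|exact Hcl|]. intros w' Hw'. apply Hwc; auto. }
  replace (t * D / 4 / t) with (D / 4) in Hm1 by (field; lra).
  pose proof (proj_ineq d Hm Hn g m 1 Hg ltac:(lra)) as P1. rewrite G1 in P1. fold pi a in P1.
  pose proof (proj_ineq d Hm Hn g m 0 Hg ltac:(lra)) as P0. rewrite G0 in P0. fold pi a in P0.
  assert (Bm : d m q <= R0).
  { pose proof (mn_near d T Hm Hc Hgl Hn n p M Hn1 HM). fold (mm n) m in H.
    pose proof (d_tri d Hm m p q). unfold R0. lra. }
  assert (Ha0 : 0 <= a) by apply (d_nonneg d Hm).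
  assert (HaR : a <= R0).
  { apply le_from_sq; auto. pose proof (pow2_ge_0 (d pi q)).
    assert ((d m q)^2 <= R0^2) by (apply pow_incr; split; [apply (d_nonneg d Hm)|exact Bm]). lra. }
  assert (T2 : d q m <= a + d pi q).
  { rewrite (d_sym d Hm q m). apply (d_tri d Hm). }
  pose proof (d_nonneg d Hm pi q) as Hf0.
  set (f := d pi q) in *.
  assert (Q1 : (d q m)^2 <= (a + f)^2) by (apply pow_incr; split; [apply (d_nonneg d Hm)|lra]).
  assert (Q2 : a^2 <= (d m c)^2) by (pose proof (pow2_ge_0 (d pi c)); lra).
  rewrite (d_sym d Hm c m) in Hm1.
  assert (Q3 : (1 - t) * a^2 <= (1 - t) * (d m c)^2) by (apply Rmult_le_compat_l; lra).
  assert (Q4 : t * a^2 <= t * R0^2) by (apply Rmult_le_compat_l; [lra|]; apply pow_incr; lra).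
  assert (Q5 : a * f <= R0 * rho) by (apply Rmult_le_compat; lra).
  assert (Q6 : f * f <= rho * 1) by (apply Rmult_le_compat; lra).
  simpl in *. nra.
Qed.

End Main3.

Lemma cvg_cluster {X : Type} (d : X -> X -> R) (u : nat -> X) q :
  seq_cvg d u q -> strong_cluster d u q.
Proof.
  intros H eps Heps N. destruct (H eps Heps) as [N1 HN1].
  exists (Nat.max N N1). split; [lia|]. apply HN1. lia.
Qed.

Theorem mainTheorem1 (X : Type) (d : X -> X -> R) (T : X -> X) :
  complete_NPC_space d -> nonexpansive d T -> distance_convex d T ->
  forall p q : X, bounded_orbit d T p ->
    let m := fun n : nat => m_n d T n p in
    ((T q = q /\ closed_co d (orbit T p) q) <-> seq_cvg d m q) /\
    (seq_cvg d m q <-> weak_cvg d m q) /\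
    (weak_cvg d m q <-> weak_cluster d m q).
Proof.
  intros [Hm [Hc [Hgl Hn]]] HT HDC p q [M HM] m. subst m.
  pose proof (L1 d T Hm Hc Hgl Hn HT HDC p M HM q) as H1.
  pose proof (L2 d T Hm Hc Hgl Hn HT p M HM q) as H2.
  pose proof (L3 d T Hm Hn p q) as H3.
  pose proof (L4 d T Hm Hn p q) as H4.
  pose proof (L5 d T Hm Hgl p q) as H5.
  pose proof (L6a d T Hm Hc Hgl Hn HT p M HM q) as H6a.
  pose proof (L6b d T Hm Hc Hgl Hn p M HM q) as H6b.
  pose proof (cvg_cluster d (fun n => m_n d T n p) q) as Hcc.
  split; [|split].
  - split; [intros [A B]; auto|]. intros Hs. apply H2, Hcc, Hs.
  - split; [exact H3|]. intros Hw. apply H1; auto.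
  - split.
    + intros Hw. apply H4. apply H1; auto.
    + intros Hw. apply H3. destruct (H2 (H5 Hw)) as [A B]. apply H1; auto.
Qed.
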